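(* Let $n\ge 0$ and $i,j,a,b\in D$ with $a\neq b$, $a\Rightarrow_n b$, $A_i(a)=1$ and $A_j(a)=0$. Define the vector $A_i^*=s_{ab}A_i\in\{0,1\}^D$ by $A_i^*(m)=A_i(m)$ for $m\notin\{a,b\}$, $A_i^*(a)=0$, $A_i^*(b)=1$. If $A_i^*\le A_j$ entrywise, then $i\Rightarrow_{n+1} j$.
   Context: Fix integers $k\ge1$, $d\ge1$, $K=\{1,\dots,k\}$, $D=\{1,\dots,d\}$. The $k$-tree is the set $K^*$ of finite words over $K$ with root the empty word $\epsilon$; $xg$ ($g\in K$) are the children of $x$. $L_n$ is the set of words of length exactly $n$ and $\Delta_n$ the set of words of length at most $n$. $A$ is a $d\times d$ matrix with entries in $\{0,1\}$, and $A_i=(A(i,1),\dots,A(i,d))$ denotes row $i$, with $A_i(m)=A(i,m)$. A (valid) labeling of $\Delta_n$ is a map $\lambda:\Delta_n\to D$ with $A(\lambda(x),\lambda(xg))=1$ for all $x\in\Delta_{n-1}$, $g\in K$. For $p,q\in D$, $p\Rightarrow_n q$ means: for every valid labeling $\lambda$ of $\Delta_n$ with $\lambda(\epsilon)=p$ there is a valid labeling $\lambda'$ of $\Delta_n$ with $\lambda'(\epsilon)=q$ and $\lambda'|_{L_n}=\lambda|_{L_n}$. *)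

(* Defs.v *)
From mathcomp Require Import all_boot.
Set Implicit Arguments. Unset Strict Implicit. Unset Printing Implicit Defensive.

(* Words over K = 'I_k are sequences; the child x g of x is rcons x g;
   the root is the empty word [::].  The 0/1 matrix A is
   encoded as a boolean matrix A : 'I_d -> 'I_d -> bool (A i m = true <-> A(i,m)=1). *)

(* lambda : seq 'I_k -> 'I_d is a valid labeling of Delta_n: only its values on
   words of length <= n matter. *)
Definition valid_labeling (k d : nat) (A : 'I_d -> 'I_d -> bool) (n : nat)
  (lam : seq 'I_k -> 'I_d) : Prop :=
  forall (x : seq 'I_k) (g : 'I_k), size x < n -> A (lam x) (lam (rcons x g)).

Definition implies_n (k d : nat) (A : 'I_d -> 'I_d -> bool) (n : nat)
  (p q : 'I_d) : Prop :=
  forall lam : seq 'I_k -> 'I_d,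
    valid_labeling A n lam -> lam [::] = p ->
    exists lam' : seq 'I_k -> 'I_d,
      [/\ valid_labeling A n lam', lam' [::] = q &
          forall x : seq 'I_k, size x = n -> lam' x = lam x].

Definition swap_row (d : nat) (A : 'I_d -> 'I_d -> bool) (i a b : 'I_d) (m : 'I_d) : bool :=
  if m == a then false else if m == b then true else A i m.

(* Main.v *)
Require Import Defs.
From mathcomp Require Import all_boot.
From Stdlib Require Import ClassicalEpsilon.

Theorem proposition3p4 (k d : nat) (hk : 1 <= k) (hd : 1 <= d)
  (A : 'I_d -> 'I_d -> bool) (n : nat) (i j a b : 'I_d) :
  a != b ->
  implies_n k A n a b ->
  A i a = true ->
  A j a = false ->
  (forall m : 'I_d, swap_row A i a b m ==> A j m) ->
  implies_n k A n.+1 i j.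
Proof.
move=> nab Hab Aia Aja Hsw lam Vlam l0.
have Ex : forall g : 'I_k, exists lg : seq 'I_k -> 'I_d,
  lam [:: g] = a -> [/\ valid_labeling A n lg, lg [::] = b &
          forall y : seq 'I_k, size y = n -> lg y = lam (g :: y)].
  move=> g; case: (eqVneq (lam [:: g]) a) => e; last first.
    by exists (fun y => lam (g :: y)) => E; rewrite E eqxx in e.
  have V : valid_labeling A n (fun y => lam (g :: y)).
    move=> y h sy; rewrite -rcons_cons; exact: Vlam.
  have [lg [? ? ?]] := Hab _ V e.
  by exists lg.
pose F g := proj1_sig (constructive_indefinite_description _ (Ex g)).
have FP g : lam [:: g] = a -> _ := proj2_sig (constructive_indefinite_description _ (Ex g)).
have Ajb : A j b.
  by have := Hsw b; rewrite /swap_row eq_sym (negbTE nab) eqxx.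
exists (fun x => match x with [::] => j | g :: y => if lam [:: g] == a then F g y else lam x end).
split => //.
- move=> [|g y] h /=.
  + move=> _; case: eqP => e.
    * by rewrite /F; case: (FP h e) => _ -> _.
    * have := Hsw (lam [:: h]); have := Vlam [::] h erefl; rewrite l0 /= => Ai.
      rewrite /swap_row; move/eqP/negbTE: e => ->.
      by case: ifP => [/eqP ->|_] //; rewrite Ai.
  + rewrite ltnS => sy; case: eqP => e.
    * by rewrite /F; case: (FP g e) => V _ _; exact: V.
    * by rewrite -rcons_cons; apply: Vlam.
- move=> [|g y] //= [sy]; case: eqP => // e.
  by rewrite /F; case: (FP g e) => _ _ ->.
Qed.
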